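(* Let $F\in\Gamma_0^s(\mathbb{R}_+)$ and $a\in(0,1]$. If $(\hat F)^a$ satisfies the triangle inequality on $[0,+\infty)$, i.e. $\hat F^a(r,t)\le \hat F^a(r,s)+\hat F^a(s,t)$ for all $r,s,t\ge0$, then $T_a(F)(s)\ge F(s)$ for every $s\ge 0$.
   Context: $\Gamma_0(\mathbb{R}_+)$ is the set of functions $F:[0,\infty)\to[0,\infty]$ that are convex, lower semicontinuous, with $F(1)=0$. For $F\in\Gamma_0(\mathbb{R}_+)$: $\mathrm{rec}(F)(r)=\lim_{\alpha\to\infty}F(1+\alpha r)/\alpha$, $F'_\infty:=\mathrm{rec}(F)(1)$; the perspective function is $\hat F(r,t)=tF(r/t)$ for $t>0$, $\hat F(r,0)=\mathrm{rec}(F)(r)$; the reverse entropy is $R(s)=sF(1/s)$ for $s>0$, $R(0)=F'_\infty$. $\Gamma_0^s(\mathbb{R}_+)$ is the set of $F\in\Gamma_0(\mathbb{R}_+)$ with $F=R$; for such $F$, $\hat F(r,t)=\hat F(t,r)$ and $\hat F(1,t)=F(t)$. The marginal perspective function $H_F$ is the lower semicontinuous envelope of $\tilde H_F(r_1,r_2)=\inf_{\theta>0}[\hat F(\theta,r_1)+\hat F(\theta,r_2)]$. For $a\in(0,1]$, $T_a:\Gamma_0(\mathbb{R}_+)\to\Gamma_0^s(\mathbb{R}_+)$ is $T_a(F)(s)=2^{1/a-1}H_F(1,s)$. *)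

(* Defs.v *)
From Stdlib Require Import Reals Lra Classical ClassicalEpsilon.
Open Scope R_scope.

(* Extended reals R ∪ {+oo} (values of F are in [0,+oo]). *)
Inductive ER : Type := Fin (x : R) | PInf.

Definition ele (x y : ER) : Prop :=
  match x, y with
  | _, PInf => True
  | PInf, Fin _ => False
  | Fin a, Fin b => a <= b
  end.

Definition eltR (c : R) (x : ER) : Prop :=
  match x with PInf => True | Fin b => c < b end.

Definition eplus (x y : ER) : ER :=
  match x, y with Fin a, Fin b => Fin (a + b) | _, _ => PInf end.

(* scaling by a real c; only used with c > 0, so c * (+oo) = +oo *)
Definition escal (c : R) (x : ER) : ER :=
  match x with Fin a => Fin (c * a) | PInf => PInf end.

(* x^a for x in [0,+oo], a > 0, with 0^a = 0 and (+oo)^a = +oo *)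
Definition epow (x : ER) (a : R) : ER :=
  match x with
  | PInf => PInf
  | Fin b => Fin (if Rle_dec b 0 then 0 else Rpower b a)
  end.

Definition eglb (P : ER -> Prop) : ER :=
  epsilon (inhabits PInf)
    (fun m => (forall x, P x -> ele m x) /\
              (forall m', (forall x, P x -> ele m' x) -> ele m' m)).
Definition elub (P : ER -> Prop) : ER :=
  epsilon (inhabits PInf)
    (fun m => (forall x, P x -> ele x m) /\
              (forall m', (forall x, P x -> ele x m') -> ele m m')).

(* Functions F : [0,oo) -> [0,oo] are represented as R -> ER; only
   arguments >= 0 matter. *)
Definition nonneg_valued (F : R -> ER) : Prop :=
  forall x, 0 <= x -> ele (Fin 0) (F x).

Definition convex_on_Rplus (F : R -> ER) : Prop :=
  forall x y l, 0 <= x -> 0 <= y -> 0 < l < 1 ->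
    ele (F (l * x + (1 - l) * y)) (eplus (escal l (F x)) (escal (1 - l) (F y))).

Definition lsc_on_Rplus (F : R -> ER) : Prop :=
  forall x c, 0 <= x -> eltR c (F x) ->
    exists d, 0 < d /\ forall y, 0 <= y -> Rabs (y - x) < d -> eltR c (F y).

Definition Gamma0 (F : R -> ER) : Prop :=
  nonneg_valued F /\ convex_on_Rplus F /\ lsc_on_Rplus F /\ F 1 = Fin 0.

Definition elim_infty (g : R -> ER) (l : ER) : Prop :=
  match l with
  | Fin L => forall eps, 0 < eps -> exists M, forall al, M < al ->
               exists v, g al = Fin v /\ Rabs (v - L) < eps
  | PInf => forall K, exists M, forall al, M < al -> eltR K (g al)
  end.

Definition recF (F : R -> ER) (r : R) : ER :=
  epsilon (inhabits PInf)
    (fun l => elim_infty (fun al => escal (/ al) (F (1 + al * r))) l).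

Definition Finf (F : R -> ER) : ER := recF F 1.

Definition persp (F : R -> ER) (r t : R) : ER :=
  if Rlt_dec 0 t then escal t (F (r / t)) else recF F r.

Definition reventropy (F : R -> ER) (s : R) : ER :=
  if Rlt_dec 0 s then escal s (F (/ s)) else Finf F.

Definition Gamma0s (F : R -> ER) : Prop :=
  Gamma0 F /\ forall s, 0 <= s -> F s = reventropy F s.

Definition Htilde (F : R -> ER) (r1 r2 : R) : ER :=
  eglb (fun v => exists th, 0 < th /\ v = eplus (persp F th r1) (persp F th r2)).

Definition lsc2_on_Rplus (g : R -> R -> ER) : Prop :=
  forall x1 x2 c, 0 <= x1 -> 0 <= x2 -> eltR c (g x1 x2) ->
    exists d, 0 < d /\ forall y1 y2, 0 <= y1 -> 0 <= y2 ->
      Rabs (y1 - x1) < d -> Rabs (y2 - x2) < d -> eltR c (g y1 y2).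

(* H_F = lower semicontinuous envelope of tilde H_F on [0,oo)^2:
   pointwise supremum of all lsc minorants *)
Definition HF (F : R -> ER) (r1 r2 : R) : ER :=
  elub (fun v => exists g, lsc2_on_Rplus g /\
          (forall y1 y2, 0 <= y1 -> 0 <= y2 -> ele (g y1 y2) (Htilde F y1 y2)) /\
          v = g r1 r2).

Definition Ta (a : R) (F : R -> ER) (s : R) : ER :=
  escal (Rpower 2 (/ a - 1)) (HF F 1 s).

(* Main.v *)
Require Import Defs.
From Stdlib Require Import Reals Lra Classical ClassicalEpsilon.
Open Scope R_scope.

Lemma exp_le_m x y : x <= y -> exp x <= exp y.
Proof. intros [H|H]. left; apply exp_increasing; auto. subst; lra. Qed.

Lemma exp_le_i x y : exp x <= exp y -> x <= y.
Proof. intros H. destruct (Rle_dec x y); auto. exfalso.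
  assert (exp y < exp x) by (apply exp_increasing; lra). lra. Qed.

Lemma ln_le_m1 y : 0 < y -> ln y <= y - 1.
Proof. intros Hy. pose proof (exp_ineq1_le (ln y)). rewrite exp_ln in H; lra. Qed.

Lemma bern a t : 0 < a <= 1 -> 0 < t -> exp (a * ln t) <= 1 + a * (t - 1).
Proof.
  intros Ha Ht.
  set (m := a * t + 1 - a).
  assert (Hm : 0 < m) by (unfold m; assert (0 < a * t) by (apply Rmult_lt_0_compat; lra); lra).
  assert (h1 := ln_le_m1 (t / m) ltac:(apply Rdiv_lt_0_compat; lra)).
  assert (h2 := ln_le_m1 (/ m) ltac:(apply Rinv_0_lt_compat; lra)).
  unfold Rdiv in h1. rewrite ln_mult in h1 by (try apply Rinv_0_lt_compat; lra).
  rewrite ln_Rinv in h1, h2 by lra.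
  assert (Hid : a * (t * / m) + (1 - a) * / m = 1) by (unfold m in *; field; lra).
  assert (e1 : a * (ln t + - ln m) <= a * (t * / m - 1)) by (apply Rmult_le_compat_l; lra).
  assert (e2 : (1 - a) * (- ln m) <= (1 - a) * (/ m - 1)) by (apply Rmult_le_compat_l; lra).
  assert (a * ln t <= ln m) by nra.
  replace (1 + a * (t - 1)) with m by (unfold m; ring).
  rewrite <- (exp_ln m) by lra. apply exp_le_m; lra.
Qed.

Definition rp (a b : R) : R := if Rle_dec b 0 then 0 else Rpower b a.

Lemma rp_nonneg a b : 0 <= rp a b.
Proof. unfold rp. destruct (Rle_dec b 0). lra. unfold Rpower. left; apply exp_pos. Qed.

Lemma rp_bound a A m : 0 < a <= 1 -> 0 <= A -> 0 < m ->
  rp a A <= exp (a * ln m) * (1 + a * (A / m - 1)).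
Proof.
  intros Ha HA Hm. unfold rp. destruct (Rle_dec A 0).
  - assert (A = 0) by lra. subst. pose proof (exp_pos (a * ln m)).
    unfold Rdiv. rewrite Rmult_0_l. nra.
  - unfold Rpower.
    replace A with (m * (A / m)) at 1 by (field; lra).
    rewrite ln_mult by (try apply Rdiv_lt_0_compat; lra).
    rewrite Rmult_plus_distr_l, exp_plus.
    apply Rmult_le_compat_l. left; apply exp_pos.
    apply bern; auto. apply Rdiv_lt_0_compat; lra.
Qed.

Lemma key_real a X A B : 0 < a <= 1 -> 0 <= A -> 0 <= B ->
  rp a X <= rp a A + rp a B -> X <= Rpower 2 (/ a - 1) * (A + B).
Proof.
  intros Ha HA HB H.
  assert (HC : 0 < Rpower 2 (/ a - 1)) by (unfold Rpower; apply exp_pos).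
  destruct (Rle_dec X 0). { nra. }
  assert (HX : rp a X = exp (a * ln X)) by (unfold rp, Rpower; destruct (Rle_dec X 0); [lra|auto]).
  assert (HAB : 0 < A + B).
  { destruct (Rle_dec (A + B) 0); try lra.
    assert (A = 0) by lra. assert (B = 0) by lra. subst.
    rewrite HX in H. unfold rp in H. destruct (Rle_dec 0 0); try lra.
    pose proof (exp_pos (a * ln X)). lra. }
  set (m := (A + B) / 2).
  assert (Hm : 0 < m) by (unfold m; lra).
  pose proof (rp_bound a A m Ha HA Hm). pose proof (rp_bound a B m Ha HB Hm).
  assert (Hs : rp a A + rp a B <= 2 * exp (a * ln m)).
  { assert (Hid : exp (a * ln m) * (1 + a * (A / m - 1)) + exp (a * ln m) * (1 + a * (B / m - 1))
          = 2 * exp (a * ln m)) by (unfold m; field; lra). lra. }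
  rewrite HX in H.
  assert (H2 : exp (a * ln X) <= exp (ln 2 + a * ln m)).
  { rewrite exp_plus, exp_ln by lra. lra. }
  apply exp_le_i in H2.
  assert (Hlm : ln m = ln (A + B) - ln 2).
  { unfold m, Rdiv. rewrite ln_mult, ln_Rinv; try lra. }
  assert (HlX : ln X <= (/ a - 1) * ln 2 + ln (A + B)).
  { replace (ln X) with (/ a * (a * ln X)) by (field; lra).
    replace ((/ a - 1) * ln 2 + ln (A + B)) with (/ a * (ln 2 + a * ln m)) by (rewrite Hlm; field; lra).
    apply Rmult_le_compat_l; auto. left; apply Rinv_0_lt_compat; lra. }
  rewrite <- (exp_ln X) by lra. unfold Rpower. rewrite <- (exp_ln (A + B)) by lra.
  rewrite <- exp_plus. apply exp_le_m. lra.
Qed.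

Lemma key_ER a X A B : 0 < a <= 1 -> ele (Fin 0) A -> ele (Fin 0) B ->
  ele (epow X a) (eplus (epow A a) (epow B a)) ->
  ele X (escal (Rpower 2 (/ a - 1)) (eplus A B)).
Proof.
  intros Ha HA HB H.
  destruct A as [x1|]; [|destruct X; simpl; auto].
  destruct B as [x2|]; [|destruct X; simpl; auto].
  destruct X as [x|]; simpl in *; [|contradiction].
  apply key_real; auto.
Qed.

Lemma glb_ex (P : ER -> Prop) : (forall x, P x -> ele (Fin 0) x) ->
  exists m, (forall x, P x -> ele m x) /\ (forall m', (forall x, P x -> ele m' x) -> ele m' m).
Proof.
  intros H0.
  destruct (classic (exists b, P (Fin b))) as [[b Hb]|Hn].
  - set (E := fun y => P (Fin (- y))).
    assert (Hbd : bound E). { exists 0. intros y Hy. specialize (H0 _ Hy). simpl in H0. lra. }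
    assert (Hne : exists y, E y). { exists (-b). unfold E. rewrite Ropp_involutive. exact Hb. }
    destruct (completeness E Hbd Hne) as [l [Hub Hlub]].
    exists (Fin (- l)). split.
    + intros [x|] Hx; simpl; auto. assert (E (-x)) by (unfold E; rewrite Ropp_involutive; auto).
      specialize (Hub _ H). lra.
    + intros [c|] Hc; simpl.
      * assert (is_upper_bound E (-c)). { intros y Hy. specialize (Hc _ Hy). simpl in Hc. lra. }
        specialize (Hlub _ H). lra.
      * specialize (Hc _ Hb). simpl in Hc. exact Hc.
  - exists PInf. split.
    + intros [x|] Hx; simpl; auto. exfalso; apply Hn; eauto.
    + intros m' _; destruct m'; simpl; auto.
Qed.

Lemma lub_ex (P : ER -> Prop) : (exists x, P x) ->
  exists m, (forall x, P x -> ele x m) /\ (forall m', (forall x, P x -> ele x m') -> ele m m').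
Proof.
  intros [x0 Hx0].
  destruct (classic (exists K, forall x, P x -> ele x (Fin K))) as [[K HK]|Hn].
  - set (E := fun y => P (Fin y)).
    assert (Hbd : bound E) by (exists K; intros y Hy; exact (HK _ Hy)).
    assert (Hne : exists y, E y).
    { destruct x0 as [b|]. exists b; exact Hx0. specialize (HK _ Hx0); simpl in HK; contradiction. }
    destruct (completeness E Hbd Hne) as [l [Hub Hlub]].
    exists (Fin l); split.
    + intros [x|] Hx; simpl. apply Hub; exact Hx. specialize (HK _ Hx); simpl in HK; contradiction.
    + intros [c|] Hc; simpl; auto. apply Hlub. intros y Hy. exact (Hc _ Hy).
  - exists PInf. split.
    + intros x _; destruct x; simpl; auto.
    + intros [c|] Hc; simpl; auto. apply Hn. exists c. exact Hc.
Qed.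

Lemma ele_refl x : ele x x.
Proof. destruct x; simpl; auto; lra. Qed.

Lemma ele_trans x y z : ele x y -> ele y z -> ele x z.
Proof. destruct x, y, z; simpl; auto; try lra; tauto. Qed.

Lemma conv_mono F r al be : Gamma0 F -> 0 <= r -> 0 < al <= be ->
  ele (F (1 + al * r)) (escal (al / be) (F (1 + be * r))).
Proof.
  intros [Hnn [Hcv [Hlsc H1]]] Hr Hab.
  destruct (Req_dec al be) as [E|E].
  - subst. replace (be / be) with 1 by (field; lra).
    destruct (F (1 + be * r)); simpl; [lra|auto].
  - assert (Hl : 0 < al / be < 1).
    { split. apply Rdiv_lt_0_compat; lra. apply (Rmult_lt_reg_r be); try lra.
      unfold Rdiv; rewrite Rmult_assoc, Rinv_l; lra. }
    assert (Hx : 0 <= 1 + be * r) by nra.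
    specialize (Hcv (1 + be * r) 1 (al / be) Hx ltac:(lra) Hl).
    replace (al / be * (1 + be * r) + (1 - al / be) * 1) with (1 + al * r) in Hcv by (field; lra).
    rewrite H1 in Hcv.
    destruct (F (1 + be * r)), (F (1 + al * r)); simpl in *; auto; lra.
Qed.

Definition phi (F : R -> ER) r al := escal (/ al) (F (1 + al * r)).

Lemma phi_mono F r al be : Gamma0 F -> 0 <= r -> 0 < al <= be ->
  ele (phi F r al) (phi F r be).
Proof.
  intros HG Hr Hab. pose proof (conv_mono F r al be HG Hr Hab) as H. unfold phi.
  destruct (F (1 + be * r)) as [v|], (F (1 + al * r)) as [u|]; simpl in *; auto.
  replace (/ be * v) with (/ al * (al / be * v)) by (field; lra).
  apply Rmult_le_compat_l; auto. left; apply Rinv_0_lt_compat; lra.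
Qed.

Lemma phi_nonneg F r al : Gamma0 F -> 0 <= r -> 0 < al -> ele (Fin 0) (phi F r al).
Proof.
  intros [Hnn _] Hr Hal. unfold phi. pose proof (Hnn (1 + al * r) ltac:(nra)) as H.
  destruct (F (1 + al * r)); simpl in *; auto.
  assert (0 < / al) by (apply Rinv_0_lt_compat; lra). nra.
Qed.

Lemma rec_ex F r : Gamma0 F -> 0 <= r -> exists l, elim_infty (phi F r) l.
Proof.
  intros HG Hr.
  destruct (classic (forall K, exists al, 0 < al /\ eltR K (phi F r al))) as [Hu|Hb].
  - exists PInf. simpl. intros K. destruct (Hu K) as [al0 [Hal0 HK]]. exists al0.
    intros al Hal. pose proof (phi_mono F r al0 al HG Hr ltac:(lra)).
    destruct (phi F r al0), (phi F r al); simpl in *; auto; lra.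
  - apply not_all_ex_not in Hb. destruct Hb as [K HK].
    assert (HK' : forall al, 0 < al -> exists v, phi F r al = Fin v /\ v <= K).
    { intros al Hal. destruct (phi F r al) as [v|] eqn:Ev.
      - exists v; split; auto. destruct (Rle_dec v K); auto. exfalso; apply HK. exists al.
        rewrite Ev. simpl. split; auto; lra.
      - exfalso; apply HK. exists al. rewrite Ev. simpl. auto. }
    set (E := fun v => exists al, 0 < al /\ phi F r al = Fin v).
    assert (Hbd : bound E).
    { exists K. intros v [al [Hal Hv]]. destruct (HK' al Hal) as [v' [Hv' Hle]].
      rewrite Hv in Hv'. injection Hv'; intros; subst; auto. }
    assert (Hne : exists v, E v).
    { destruct (HK' 1 ltac:(lra)) as [v [Hv _]]. exists v, 1. split; auto; lra. }
    destruct (completeness E Hbd Hne) as [L [Hub Hlub]].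
    exists (Fin L). simpl. intros eps Heps.
    assert (Hex : exists al0, 0 < al0 /\ exists v0, phi F r al0 = Fin v0 /\ L - eps < v0).
    { apply NNPP. intros Hn. assert (is_upper_bound E (L - eps)).
      { intros v [al [Hal Hv]]. destruct (Rle_dec v (L - eps)); auto. exfalso. apply Hn.
        exists al. split; auto. exists v. split; auto. lra. }
      specialize (Hlub _ H). lra. }
    destruct Hex as [al0 [Hal0 [v0 [Hv0 Hlt]]]].
    exists al0. intros al Hal.
    destruct (HK' al ltac:(lra)) as [v [Hv _]]. exists v. split; auto.
    assert (E v) by (exists al; split; auto; lra).
    specialize (Hub _ H).
    pose proof (phi_mono F r al0 al HG Hr ltac:(lra)) as Hm. rewrite Hv0, Hv in Hm. simpl in Hm.
    apply Rabs_def1; lra.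
Qed.

Lemma rec_spec F r : Gamma0 F -> 0 <= r -> elim_infty (phi F r) (recF F r).
Proof.
  intros HG Hr. unfold recF. apply epsilon_spec. exact (rec_ex F r HG Hr).
Qed.

Lemma rec_ge F r al : Gamma0 F -> 0 <= r -> 0 < al -> ele (phi F r al) (recF F r).
Proof.
  intros HG Hr Hal. pose proof (rec_spec F r HG Hr) as Hs.
  destruct (recF F r) as [L|] eqn:El; [|destruct (phi F r al); simpl; auto].
  simpl in Hs.
  destruct (phi F r al) as [u|] eqn:Eu; simpl.
  - destruct (Rle_dec u L); auto. exfalso.
    destruct (Hs (u - L) ltac:(lra)) as [M HM].
    destruct (HM (Rmax M al + 1) ltac:(pose proof (Rmax_l M al); lra)) as [v [Hv Hvl]].
    pose proof (phi_mono F r al (Rmax M al + 1) HG Hr ltac:(pose proof (Rmax_r M al); lra)) as Hm.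
    rewrite Eu, Hv in Hm. simpl in Hm. apply Rabs_def2 in Hvl. lra.
  - destruct (Hs 1 ltac:(lra)) as [M HM].
    destruct (HM (Rmax M al + 1) ltac:(pose proof (Rmax_l M al); lra)) as [v [Hv Hvl]].
    pose proof (phi_mono F r al (Rmax M al + 1) HG Hr ltac:(pose proof (Rmax_r M al); lra)) as Hm.
    rewrite Eu, Hv in Hm. simpl in Hm. auto.
Qed.

Lemma rec_nonneg F r : Gamma0 F -> 0 <= r -> ele (Fin 0) (recF F r).
Proof.
  intros HG Hr. eapply ele_trans. apply (phi_nonneg F r 1 HG Hr ltac:(lra)).
  apply rec_ge; auto; lra.
Qed.

Lemma persp_nonneg F r t : Gamma0 F -> 0 <= r -> 0 <= t -> ele (Fin 0) (persp F r t).
Proof.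
  intros HG Hr Ht. unfold persp. destruct (Rlt_dec 0 t).
  - destruct HG as [Hnn _]. assert (0 <= r / t) by (unfold Rdiv; apply Rmult_le_pos; [lra| left; apply Rinv_0_lt_compat; lra]).
    pose proof (Hnn _ H). destruct (F (r / t)); simpl in *; auto. nra.
  - apply rec_nonneg; auto.
Qed.

Lemma persp_sym F x y : Gamma0s F -> 0 < x -> 0 < y -> persp F x y = persp F y x.
Proof.
  intros [HG Hs] Hx Hy. unfold persp.
  destruct (Rlt_dec 0 y); try lra. destruct (Rlt_dec 0 x); try lra.
  rewrite (Hs (y / x)) by (left; apply Rdiv_lt_0_compat; lra).
  unfold reventropy. destruct (Rlt_dec 0 (y / x)) as [h|h].
  2: exfalso; apply h; apply Rdiv_lt_0_compat; lra.
  replace (/ (y / x)) with (x / y) by (field; lra).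
  destruct (F (x / y)); simpl; auto. f_equal. field. lra.
Qed.

Lemma lt_div_of w s v : 0 < s -> w < s * v -> w / s < v.
Proof. intros Hs H. apply (Rmult_lt_reg_l s); auto.
  replace (s * (w / s)) with w by (field; lra). lra. Qed.

Lemma persp_lsc_pos F s w : Gamma0s F -> 0 < s -> 0 < w -> eltR w (F s) ->
  exists d, 0 < d /\ forall y1 y2, 0 <= y1 -> 0 <= y2 -> Rabs (y1 - 1) < d -> Rabs (y2 - s) < d ->
    0 < y1 /\ ele (Fin w) (persp F y1 y2).
Proof.
  intros [HG Hs] Hs0 Hw0 Hw.
  pose proof HG as [Hnn [Hcv [Hlsc H1]]].
  rewrite Hs in Hw by lra. unfold reventropy in Hw. destruct (Rlt_dec 0 s); try lra.
  assert (Hws : 0 < w / s) by (apply Rdiv_lt_0_compat; lra).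
  assert (Hw2 : exists w2, w / s < w2 /\ eltR w2 (F (/ s))).
  { destruct (F (/ s)) as [v|]; simpl in Hw.
    - apply lt_div_of in Hw; auto. exists ((w / s + v) / 2). simpl. split; lra.
    - exists (w / s + 1). simpl. split; auto; lra. }
  destruct Hw2 as [w2 [Hw2a Hw2b]].
  destruct (Hlsc (/ s) w2 ltac:(left; apply Rinv_0_lt_compat; lra) Hw2b) as [d0 [Hd0 Hd0F]].
  set (q := w / w2).
  assert (Hq : q < s).
  { unfold q. apply (Rmult_lt_reg_l w2); try lra.
    replace (w2 * (w / w2)) with w by (field; lra).
    assert (w = s * (w / s)) by (field; lra). nra. }
  assert (Hq0 : 0 < q) by (unfold q; apply Rdiv_lt_0_compat; lra).
  set (k := d0 * s * s / (2 * (s + 1))).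
  assert (Hk : 0 < k) by (unfold k; apply Rdiv_lt_0_compat; [repeat apply Rmult_lt_0_compat|]; lra).
  set (d := Rmin (Rmin (1/2) (s/2)) (Rmin (s - q) k)).
  assert (Hd1 : d <= 1/2) by (unfold d; eapply Rle_trans; [apply Rmin_l|apply Rmin_l]).
  assert (Hd2 : d <= s/2) by (unfold d; eapply Rle_trans; [apply Rmin_l|apply Rmin_r]).
  assert (Hd3 : d <= s - q) by (unfold d; eapply Rle_trans; [apply Rmin_r|apply Rmin_l]).
  assert (Hd4 : d <= k) by (unfold d; eapply Rle_trans; [apply Rmin_r|apply Rmin_r]).
  assert (Hd : 0 < d) by (unfold d; repeat apply Rmin_glb_lt; lra).
  exists d. split; auto.
  intros y1 y2 Hy1 Hy2 Ha1 Ha2.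
  apply Rabs_def2 in Ha1. apply Rabs_def2 in Ha2.
  split; [lra|].
  unfold persp. destruct (Rlt_dec 0 y2); try lra.
  assert (Hz : Rabs (y1 / y2 - / s) < d0).
  { set (z := y1 / y2 - / s).
    assert (Hzm : z * (s * y2) = s * y1 - y2) by (unfold z; field; lra).
    assert (Hsy : 0 < s * y2) by (apply Rmult_lt_0_compat; lra).
    assert (Hkk : (s + 1) * k = d0 * s * s / 2) by (unfold k; field; lra).
    assert (Hb1 : (s + 1) * d <= (s + 1) * k) by (apply Rmult_le_compat_l; lra).
    assert (Hb2 : s * y1 - y2 < (s + 1) * d) by nra.
    assert (Hb3 : - ((s + 1) * d) < s * y1 - y2) by nra.
    assert (Hb4 : d0 * s * s / 2 < d0 * (s * y2)).
    { replace (d0 * (s * y2)) with (d0 * s * y2) by ring.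
      assert (0 < d0 * s) by (apply Rmult_lt_0_compat; lra).
      replace (d0 * s * s / 2) with (d0 * s * (s / 2)) by field.
      apply Rmult_lt_compat_l; lra. }
    apply Rabs_def1.
    - apply (Rmult_lt_reg_r (s * y2)); auto. lra.
    - apply (Rmult_lt_reg_r (s * y2)); auto. lra. }
  specialize (Hd0F (y1 / y2) ltac:(unfold Rdiv; apply Rmult_le_pos; [lra|left; apply Rinv_0_lt_compat; lra]) Hz).
  destruct (F (y1 / y2)) as [u|]; simpl in *; auto.
  assert (Hqw : q * w2 = w) by (unfold q; field; lra).
  assert (y2 * w2 >= q * w2) by (apply Rmult_ge_compat_r; lra).
  assert (y2 * u >= y2 * w2) by (apply Rmult_ge_compat_l; lra).
  lra.
Qed.

Lemma persp_lsc_zero F w : Gamma0s F -> 0 < w -> eltR w (F 0) ->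
  exists d, 0 < d /\ forall y1 y2, 0 <= y1 -> 0 <= y2 -> Rabs (y1 - 1) < d -> Rabs (y2 - 0) < d ->
    0 < y1 /\ ele (Fin w) (persp F y1 y2).
Proof.
  intros [HG Hs] Hw0 Hw.
  pose proof HG as [Hnn [Hcv [Hlsc H1]]].
  rewrite Hs in Hw by lra. unfold reventropy in Hw. destruct (Rlt_dec 0 0); try lra.
  unfold Finf in Hw.
  pose proof (rec_spec F 1 HG ltac:(lra)) as Hsp.
  assert (Hal : exists al, 0 < al /\ eltR w (phi F 1 al)).
  { destruct (recF F 1) as [L|]; simpl in Hw, Hsp.
    - destruct (Hsp (L - w) ltac:(lra)) as [M HM].
      destruct (HM (Rmax M 0 + 1) ltac:(pose proof (Rmax_l M 0); lra)) as [v [Hv Hvl]].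
      exists (Rmax M 0 + 1). split. pose proof (Rmax_r M 0); lra.
      rewrite Hv. simpl. apply Rabs_def2 in Hvl. lra.
    - destruct (Hsp w) as [M HM]. exists (Rmax M 0 + 1). split. pose proof (Rmax_r M 0); lra.
      apply HM. pose proof (Rmax_l M 0); lra. }
  destruct Hal as [al [Hal Hwal]].
  assert (Hw1 : exists w1, w < w1 /\ eltR (w1 * al) (F (1 + al * 1))).
  { unfold phi in Hwal. destruct (F (1 + al * 1)) as [u|]; simpl in *.
    - exists ((w + / al * u) / 2). split. lra.
      replace ((w + / al * u) / 2 * al) with ((w * al + u) / 2) by (field; lra).
      assert (w * al < u).
      { assert (Hx : w * al < / al * u * al) by (apply Rmult_lt_compat_r; lra).
        replace (/ al * u * al) with u in Hx by (field; lra). exact Hx. }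
      lra.
    - exists (w + 1). split; auto; lra. }
  destruct Hw1 as [w1 [Hw1a Hw1b]].
  destruct (Hlsc (1 + al * 1) (w1 * al) ltac:(lra) Hw1b) as [d0 [Hd0 Hd0F]].
  assert (Hr : 0 < 1 - w / w1).
  { assert (w / w1 < 1). { apply (Rmult_lt_reg_l w1); try lra. replace (w1 * (w / w1)) with w by (field; lra). lra. }
    lra. }
  set (d := Rmin (Rmin (1/2) (d0 / al)) (Rmin (/ (al + 2)) ((1 - w / w1) / 2))).
  assert (Hd1 : d <= 1/2) by (unfold d; eapply Rle_trans; [apply Rmin_l|apply Rmin_l]).
  assert (Hd2 : d <= d0 / al) by (unfold d; eapply Rle_trans; [apply Rmin_l|apply Rmin_r]).
  assert (Hd3 : d <= / (al + 2)) by (unfold d; eapply Rle_trans; [apply Rmin_r|apply Rmin_l]).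
  assert (Hd4 : d <= (1 - w / w1) / 2) by (unfold d; eapply Rle_trans; [apply Rmin_r|apply Rmin_r]).
  assert (Hd : 0 < d).
  { unfold d; repeat apply Rmin_glb_lt; try lra.
    apply Rdiv_lt_0_compat; lra. apply Rinv_0_lt_compat; lra. }
  exists d. split; auto.
  intros y1 y2 Hy1 Hy2 Ha1 Ha2.
  assert (Ha1' := Rabs_def2 _ _ Ha1). apply Rabs_def2 in Ha2.
  split; [lra|].
  assert (HG1 : eltR (w1 * al) (F (1 + al * y1))).
  { apply Hd0F. nra.
    replace (1 + al * y1 - (1 + al * 1)) with (al * (y1 - 1)) by ring.
    rewrite Rabs_mult, (Rabs_pos_eq al) by lra.
    replace d0 with (al * (d0 / al)) by (field; lra).
    apply Rmult_lt_compat_l; lra. }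
  unfold persp. destruct (Rlt_dec 0 y2) as [Hy2p|Hy2p].
  - set (be := / y2 - / y1).
    assert (Hiy2 : al + 2 < / y2).
    { replace (al + 2) with (/ / (al + 2)) by (field; lra). apply Rinv_lt_contravar.
      apply Rmult_lt_0_compat; [lra| apply Rinv_0_lt_compat; lra]. lra. }
    assert (Hiy1 : / y1 < 2).
    { replace 2 with (/ (1/2)) by field. apply Rinv_lt_contravar; lra. }
    assert (Hbe : al < be) by (unfold be; lra).
    pose proof (conv_mono F y1 al be HG Hy1 ltac:(lra)) as Hm.
    replace (1 + be * y1) with (y1 / y2) in Hm by (unfold be; field; lra).
    destruct (F (y1 / y2)) as [u|]; simpl; auto.
    destruct (F (1 + al * y1)) as [z|]; simpl in HG1, Hm; [|contradiction].
    assert (Hu : w1 * be < u).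
    { assert (w1 * al < al / be * u) by lra.
      replace u with (be / al * (al / be * u)) by (field; lra).
      replace (w1 * be) with (be / al * (w1 * al)) by (field; lra).
      apply Rmult_lt_compat_l; auto. apply Rdiv_lt_0_compat; lra. }
    assert (Hyb : y2 * be = 1 - y2 / y1) by (unfold be; field; lra).
    assert (Hy21 : y2 / y1 <= 2 * y2).
    { unfold Rdiv. rewrite Rmult_comm. apply Rmult_le_compat_r; lra. }
    assert (H5 : y2 * (w1 * be) < y2 * u) by (apply Rmult_lt_compat_l; lra).
    assert (H6 : w = w1 * (w / w1)) by (field; lra).
    assert (H7 : w1 * (w / w1) <= w1 * (1 - y2 / y1)) by (apply Rmult_le_compat_l; lra).
    assert (H8 : y2 * (w1 * be) = w1 * (1 - y2 / y1)) by (rewrite <- Hyb; ring).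
    lra.
  - pose proof (rec_ge F y1 al HG Hy1 Hal) as Hrg. unfold phi in Hrg.
    destruct (F (1 + al * y1)) as [z|]; simpl in HG1, Hrg.
    + destruct (recF F y1) as [rr|]; simpl in *; auto.
      assert (w1 < / al * z).
      { replace w1 with (/ al * (w1 * al)) by (field; lra).
        apply Rmult_lt_compat_l; auto. apply Rinv_0_lt_compat; lra. }
      lra.
    + destruct (recF F y1); simpl in *; auto; contradiction.
Qed.

Lemma Ht_ge F y1 y2 m' : Gamma0 F -> 0 <= y1 -> 0 <= y2 ->
  (forall th, 0 < th -> ele m' (eplus (persp F th y1) (persp F th y2))) ->
  ele m' (Htilde F y1 y2).
Proof.
  intros HG H1 H2 Hm. unfold Htilde, eglb.
  match goal with |- ele _ (epsilon _ ?Q) => assert (Hq : Q (epsilon (inhabits PInf) Q)) end.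
  { apply epsilon_spec. apply glb_ex. intros x [th [Hth ->]].
    pose proof (persp_nonneg F th y1 HG ltac:(lra) H1).
    pose proof (persp_nonneg F th y2 HG ltac:(lra) H2).
    destruct (persp F th y1), (persp F th y2); simpl in *; auto; lra. }
  destruct Hq as [_ Hq]. apply Hq. intros x [th [Hth ->]]. auto.
Qed.

Lemma HF_ge F s g : lsc2_on_Rplus g ->
  (forall y1 y2, 0 <= y1 -> 0 <= y2 -> ele (g y1 y2) (Htilde F y1 y2)) ->
  ele (g 1 s) (HF F 1 s).
Proof.
  intros Hl Hm. unfold HF, elub.
  match goal with |- ele _ (epsilon _ ?Q) => assert (Hq : Q (epsilon (inhabits PInf) Q)) end.
  { apply epsilon_spec. apply lub_ex. exists (g 1 s). exists g. auto. }
  destruct Hq as [Hq _]. apply Hq. exists g. auto.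
Qed.

Lemma Ht_nonneg F y1 y2 : Gamma0 F -> 0 <= y1 -> 0 <= y2 -> ele (Fin 0) (Htilde F y1 y2).
Proof.
  intros HG H1 H2. apply Ht_ge; auto. intros th Hth.
  pose proof (persp_nonneg F th y1 HG ltac:(lra) H1).
  pose proof (persp_nonneg F th y2 HG ltac:(lra) H2).
  destruct (persp F th y1), (persp F th y2); simpl in *; auto; lra.
Qed.

Lemma indicator_ge F s d v : Gamma0 F -> 0 < d -> 0 <= v ->
  (forall y1 y2, 0 <= y1 -> 0 <= y2 -> Rabs (y1 - 1) < d -> Rabs (y2 - s) < d ->
     ele (Fin v) (Htilde F y1 y2)) ->
  ele (Fin v) (HF F 1 s).
Proof.
  intros HG Hd Hv Hbox.
  set (g := fun y1 y2 => if Rlt_dec (Rabs (y1 - 1)) d then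
              if Rlt_dec (Rabs (y2 - s)) d then Fin v else Fin 0 else Fin 0).
  assert (Hg : g 1 s = Fin v).
  { unfold g. replace (1 - 1) with 0 by ring. replace (s - s) with 0 by ring.
    rewrite Rabs_R0. destruct (Rlt_dec 0 d); try lra. auto. }
  rewrite <- Hg. apply HF_ge.
  - intros x1 x2 c Hx1 Hx2 Hc. unfold g in Hc.
    destruct (Rlt_dec (Rabs (x1 - 1)) d) as [i1|i1]; [destruct (Rlt_dec (Rabs (x2 - s)) d) as [i2|i2]|].
    + exists (Rmin (d - Rabs (x1 - 1)) (d - Rabs (x2 - s))). split.
      apply Rmin_glb_lt; lra.
      intros y1 y2 _ _ Hy1 Hy2. unfold g.
      pose proof (Rmin_l (d - Rabs (x1 - 1)) (d - Rabs (x2 - s))).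
      pose proof (Rmin_r (d - Rabs (x1 - 1)) (d - Rabs (x2 - s))).
      pose proof (Rabs_triang (y1 - x1) (x1 - 1)). pose proof (Rabs_triang (y2 - x2) (x2 - s)).
      replace (y1 - x1 + (x1 - 1)) with (y1 - 1) in * by ring.
      replace (y2 - x2 + (x2 - s)) with (y2 - s) in * by ring.
      destruct (Rlt_dec (Rabs (y1 - 1)) d); try lra.
      destruct (Rlt_dec (Rabs (y2 - s)) d); try lra. exact Hc.
    + simpl in Hc. exists 1. split; [lra|]. intros y1 y2 _ _ _ _. unfold g.
      destruct (Rlt_dec _ d); [destruct (Rlt_dec _ d)|]; simpl; lra.
    + simpl in Hc. exists 1. split; [lra|]. intros y1 y2 _ _ _ _. unfold g.
      destruct (Rlt_dec _ d); [destruct (Rlt_dec _ d)|]; simpl; lra.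
  - intros y1 y2 H1 H2. unfold g.
    destruct (Rlt_dec (Rabs (y1 - 1)) d); [destruct (Rlt_dec (Rabs (y2 - s)) d)|].
    + apply Hbox; auto.
    + apply Ht_nonneg; auto.
    + apply Ht_nonneg; auto.
Qed.

Theorem mainTheorem3 (F : R -> ER) (a : R) :
  Gamma0s F -> 0 < a <= 1 ->
  (forall r s t, 0 <= r -> 0 <= s -> 0 <= t ->
     ele (epow (persp F r t) a)
         (eplus (epow (persp F r s) a) (epow (persp F s t) a))) ->
  forall s, 0 <= s -> ele (F s) (Ta a F s).
Proof.
  intros HGs Ha Htri s Hs0.
  pose proof HGs as [HG Hsym].
  set (C := Rpower 2 (/ a - 1)).
  assert (HC : 0 < C) by (unfold C, Rpower; apply exp_pos).
  assert (HA : forall w, 0 < w -> eltR w (F s) -> ele (Fin (w / C)) (HF F 1 s)).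
  { intros w Hw Hws.
    assert (Hl : exists d, 0 < d /\ forall y1 y2, 0 <= y1 -> 0 <= y2 -> Rabs (y1 - 1) < d ->
               Rabs (y2 - s) < d -> 0 < y1 /\ ele (Fin w) (persp F y1 y2)).
    { destruct (Rlt_dec 0 s). apply persp_lsc_pos; auto.
      assert (s = 0) by lra. subst. apply persp_lsc_zero; auto. }
    destruct Hl as [d [Hd Hdl]].
    apply (indicator_ge F s d); auto.
    { unfold Rdiv. apply Rmult_le_pos; [lra| left; apply Rinv_0_lt_compat; lra]. }
    intros y1 y2 H1 H2 Hb1 Hb2. destruct (Hdl y1 y2 H1 H2 Hb1 Hb2) as [Hy1 Hwp].
    apply Ht_ge; auto. intros th Hth.
    pose proof (Htri y1 th y2 H1 ltac:(lra) H2) as Ht.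
    rewrite (persp_sym F y1 th HGs Hy1 Hth) in Ht.
    pose proof (key_ER a _ _ _ Ha (persp_nonneg F th y1 HG ltac:(lra) H1)
                  (persp_nonneg F th y2 HG ltac:(lra) H2) Ht) as Hk.
    fold C in Hk.
    pose proof (ele_trans _ _ _ Hwp Hk) as Hk2.
    destruct (eplus (persp F th y1) (persp F th y2)) as [x|]; simpl in *; auto.
    apply (Rmult_le_reg_l C); auto. replace (C * (w / C)) with w by (field; lra). lra. }
  assert (HB : ele (Fin 0) (HF F 1 s)).
  { apply (indicator_ge F s 1 0); auto; try lra.
    intros y1 y2 H1 H2 _ _. apply Ht_nonneg; auto. }
  unfold Ta. fold C.
  pose proof (proj1 HG s Hs0) as Hnn.
  destruct (F s) as [f|] eqn:Ef; destruct (HF F 1 s) as [h|] eqn:Eh; simpl in *; auto.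
  - destruct (Rle_dec f (C * h)); auto. exfalso.
    assert (0 < f). { assert (0 <= C * h) by (apply Rmult_le_pos; lra). lra. }
    specialize (HA ((f + C * h) / 2) ltac:(assert (0 <= C * h) by (apply Rmult_le_pos; lra); lra) ltac:(lra)).
    assert ((f + C * h) / 2 <= C * h).
    { replace ((f + C * h) / 2) with (C * ((f + C * h) / 2 / C)) by (field; lra).
      apply Rmult_le_compat_l; lra. }
    lra.
  - specialize (HA (C * (h + 1)) ltac:(apply Rmult_lt_0_compat; lra) I).
    replace (C * (h + 1) / C) with (h + 1) in HA by (field; lra). lra.
Qed.
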